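(* (1) Let $m\ge2$ be an integer and $f(h)=h^m$. Then for every $n\in\mathbb{N}$, $\mathcal{H}(f)$ has infinitely many two-sided ideals $I$ such that $\mathcal{H}(f)/I\cong M_n(\mathbb{C})$ (the algebra of $n\times n$ complex matrices). (2) For $f(h)=h^2+2h-3/4$, the algebra $\mathcal{H}(f)$ has no simple module of dimension $2$.
   Context: For $f(h)\in\mathbb{C}[h]$, $\mathcal{H}(f)$ is the unital associative $\mathbb{C}$-algebra generated by $x,y,h$ with relations $hx=xf(h)$, $yh=f(h)y$, $yx-xy=f(h)-h$. $\mathbb{N}$ denotes the positive integers. *)

(* Defs.v *)
From HB Require Import structures.
From mathcomp Require Import all_boot all_order all_algebra.
Set Implicit Arguments. Unset Strict Implicit. Unset Printing Implicit Defensive.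
Import Order.TTheory GRing.Theory Num.Theory.
Local Open Scope ring_scope.

(* Noncommutative polynomial expressions in the generators x, y, h with
   coefficients in C: elements of the free algebra C<x,y,h>.
   H(f) is the quotient of this free algebra by the defining relations. *)
Inductive ncterm (C : Type) : Type :=
  | NCx | NCy | NCh
  | NCconst of C
  | NCadd of ncterm C & ncterm C
  | NCmul of ncterm C & ncterm C.

Fixpoint nceval (C : comNzRingType) (n : nat) (X Y H : 'M[C]_n.+1)
    (t : ncterm C) : 'M[C]_n.+1 :=
  match t with
  | NCx => X
  | NCy => Y
  | NCh => H
  | NCconst c => c%:M
  | NCadd t1 t2 => nceval X Y H t1 + nceval X Y H t2
  | NCmul t1 t2 => nceval X Y H t1 * nceval X Y H t2
  end.

(* The triple (X,Y,H) satisfies the defining relations of H(f):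
   hx = x f(h), yh = f(h) y, yx - xy = f(h) - h.
   Equivalently x |-> X, y |-> Y, h |-> H defines an algebra map H(f) -> M_{n+1}(C). *)
Definition Hf_rel (C : comNzRingType) (n : nat) (f : {poly C})
    (X Y H : 'M[C]_n.+1) : Prop :=
  [/\ H * X = X * horner_mx H f,
      Y * H = horner_mx H f * Y &
      Y * X - X * Y = horner_mx H f - H].

(* The algebra map H(f) -> M_{n+1}(C) given by (X,Y,H) is surjective. *)
Definition Hf_rep_onto (C : comNzRingType) (n : nat) (X Y H : 'M[C]_n.+1) : Prop :=
  forall A : 'M[C]_n.+1, exists t : ncterm C, nceval X Y H t = A.

(* Two representations have different kernels (as subsets of H(f),
   equivalently of the free algebra, since both contain the relations). *)
Definition Hf_ker_differ (C : comNzRingType) (n : nat)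
    (X Y H X' Y' H' : 'M[C]_n.+1) : Prop :=
  exists t : ncterm C, (nceval X Y H t == 0) != (nceval X' Y' H' t == 0).

(* A 2-dimensional left H(f)-module is C^2 (column vectors) with x,y,h acting
   by matrices X,Y,H satisfying the relations.  Submodules are subspaces of
   column vectors stable under X,Y,H; we encode a subspace W of column vectors
   by a matrix U whose rows span W^T, so W is A-stable iff (U *m A^T <= U)%MS. *)
Definition simple_mod2 (C : fieldType) (X Y H : 'M[C]_2) : Prop :=
  forall U : 'M[C]_2,
    (U *m X^T <= U)%MS -> (U *m Y^T <= U)%MS -> (U *m H^T <= U)%MS ->
    U = 0 \/ row_full U.

(* Main.v *)
Require Import Defs.
From HB Require Import structures.
From mathcomp Require Import all_boot all_order all_algebra.
From mathcomp Require Import all_fingroup cyclic separable cyclotomic.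
From mathcomp Require Import ring zify.
Set Implicit Arguments. Unset Strict Implicit. Unset Printing Implicit Defensive.
Import Order.TTheory GRing.Theory Num.Theory.
Local Open Scope ring_scope.

Lemma ab_id (V : zmodType) (a b d e p q : V) : a + b + (d + e) + (p + q) + (q - (a + p)) = b + d + e + q + q.
Proof.
rewrite opprD addrC !addrA [q - a - p + a]addrAC subrK.
rewrite ![_ - p + _]addrAC addrAC addrK [q + b]addrC.
by rewrite ![_ + q + _]addrAC.
Qed.

Section Alg.
Variables (R : nzRingType) (h x y c F M : R).
Hypothesis cC : forall z, c * z = z * c.
Hypothesis FE0 : F = h*h + h + h - c.
Hypothesis ME0 : M = F - h.
Hypothesis hx : h*x = x*F.
Hypothesis hy : y*h = F*y.

Lemma ME : M = h*h + h - c.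
Proof. by rewrite ME0 FE0 addrAC addrK. Qed.

Lemma FE : F = h + M.
Proof. by rewrite ME0 addrC subrK. Qed.

Lemma Mh : M * h = h * M.
Proof. by rewrite ME mulrBl mulrBr mulrDl mulrDr cC -!mulrA. Qed.

Lemma Fx : F * x = x * (F*F + F + F - c).
Proof.
have -> : F * x = h*(h*x) + h*x + h*x - c*x by rewrite FE0 !mulrBl !mulrDl mulrA.
rewrite hx [h * (x * F)]mulrA hx cC -mulrA.
by rewrite !mulrBr !mulrDr.
Qed.

Lemma Mx : M * x = x * (F*F + F - c).
Proof. by rewrite ME0 mulrBl Fx hx -mulrBr addrAC addrK. Qed.

Lemma yF : y * F = (F*F + F + F - c) * y.
Proof.
have -> : y * F = (y*h)*h + y*h + y*h - y*c by rewrite FE0 !mulrBr !mulrDr mulrA.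
rewrite hy -[F * y * h]mulrA hy -cC mulrA.
by rewrite !mulrBl !mulrDl.
Qed.

Lemma yM : y * M = (F*F + F - c) * y.
Proof. by rewrite ME0 mulrBr yF hy -mulrBl addrAC addrK. Qed.

Lemma FFc : F*F + F - c = h*M + M*h + M*M + M + M.
Proof.
have cE : c = h*h + h - M by rewrite ME opprB addrC subrK.
rewrite FE cE mulrDl !mulrDr opprB.
exact: ab_id.
Qed.

Lemma MXM : M*M = 0 -> M*x*M = 0.
Proof.
move=> MM; rewrite Mx FFc Mh -mulrA !mulrDl -!mulrA MM.
by rewrite !mulr0 !addr0 mulr0.
Qed.

Lemma MYM : M*M = 0 -> M*y*M = 0.
Proof.
move=> MM; rewrite -mulrA yM FFc Mh mulrA !mulrDr !mulrA MM.
rewrite -[M * h * M]mulrA -Mh mulrA MM.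
by rewrite !mul0r !addr0 mul0r.
Qed.
End Alg.

Section Two.
Variable C : numClosedFieldType.
Implicit Types (A B N : 'M[C]_2) (v w : 'cV[C]_2).

Lemma I2 (i : 'I_2) : i = 0 \/ i = 1.
Proof. by case: i => [[|[|i]] Hi]; [left|right|]; try apply: val_inj. Qed.

Lemma lift01 : lift ord0 (ord0 : 'I_1) = 1 :> 'I_2.
Proof. exact: val_inj. Qed.

Lemma mulmx2E A v i : (A *m v) i 0 = A i 0 * v 0 0 + A i 1 * v 1 0.
Proof. by rewrite mxE !big_ord_recl big_ord0 addr0 lift01. Qed.

Lemma mulmx22E A B i j : (A * B) i j = A i 0 * B 0 j + A i 1 * B 1 j.
Proof. by rewrite mxE !big_ord_recl big_ord0 addr0 lift01. Qed.

Lemma cV2P v w : v 0 0 = w 0 0 -> v 1 0 = w 1 0 -> v = w.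
Proof.
move=> h0 h1; apply/matrixP => i j; rewrite [j]ord1.
by case: (I2 i) => ->.
Qed.

Lemma M2P A B : A 0 0 = B 0 0 -> A 0 1 = B 0 1 -> A 1 0 = B 1 0 -> A 1 1 = B 1 1 -> A = B.
Proof.
move=> h00 h01 h10 h11; apply/matrixP => i j.
by case: (I2 i) => ->; case: (I2 j) => ->.
Qed.

Lemma scal2E (a : C) : ((a%:M : 'M[C]_2) 0 0 = a) * ((a%:M : 'M[C]_2) 1 1 = a)
   * ((a%:M : 'M[C]_2) 0 1 = 0) * ((a%:M : 'M[C]_2) 1 0 = 0).
Proof. by rewrite !mxE /=. Qed.

Definition tr2 A := A 0 0 + A 1 1.
Definition dt2 A := A 0 0 * A 1 1 - A 0 1 * A 1 0.

Lemma CH2 A : A * A = tr2 A *: A - (dt2 A)%:M.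
Proof.
by apply: M2P; rewrite !mulmx22E !mxE /= /tr2 /dt2; ring.
Qed.

Lemma tr2_comm A B : tr2 (A * B) = tr2 (B * A).
Proof. by rewrite /tr2 !mulmx22E; ring. Qed.

Lemma tr2B A B : tr2 (A - B) = tr2 A - tr2 B.
Proof. by rewrite /tr2 !mxE; ring. Qed.

Lemma tr2D A B : tr2 (A + B) = tr2 A + tr2 B.
Proof. by rewrite /tr2 !mxE; ring. Qed.

Lemma trHH A : tr2 (A * A) = tr2 A * tr2 A - 2%:R * dt2 A.
Proof. by rewrite /tr2 /dt2 !mulmx22E; ring. Qed.

Lemma tr2c (a : C) : tr2 a%:M = a + a.
Proof. by rewrite /tr2 !mxE. Qed.

Lemma cV2_neq0 v : v != 0 -> v 0 0 != 0 \/ v 1 0 != 0.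
Proof.
move=> vn0; case: (eqVneq (v 0 0) 0) => h0; last by left.
case: (eqVneq (v 1 0) 0) => h1; last by right.
by case/eqP: vn0; apply: cV2P; rewrite ?h0 ?h1 mxE.
Qed.

Lemma K2 N v w : N != 0 -> v != 0 -> N *m v = 0 -> N *m w = 0 -> exists k, w = k *: v.
Proof.
move=> Nn0 vn0 Nv Nw.
have ev i : N i 0 * v 0 0 + N i 1 * v 1 0 = 0 by rewrite -mulmx2E Nv mxE.
have ew i : N i 0 * w 0 0 + N i 1 * w 1 0 = 0 by rewrite -mulmx2E Nw mxE.
set d := v 0 0 * w 1 0 - v 1 0 * w 0 0.
have d0 : d = 0.
  apply/eqP; apply: contraNT Nn0 => dn0; apply/eqP.
  have e0 i : N i 0 * d = 0.
    have -> : N i 0 * d = w 1 0 * (N i 0 * v 0 0 + N i 1 * v 1 0) - v 1 0 * (N i 0 * w 0 0 + N i 1 * w 1 0) by rewrite /d; ring.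
    by rewrite ev ew !mulr0 subr0.
  have e1 i : N i 1 * d = 0.
    have -> : N i 1 * d = - w 0 0 * (N i 0 * v 0 0 + N i 1 * v 1 0) + v 0 0 * (N i 0 * w 0 0 + N i 1 * w 1 0) by rewrite /d; ring.
    by rewrite ev ew !mulr0 addr0.
  have z i j : N i j = 0.
    case: (I2 j) => ->; [move: (e0 i) | move: (e1 i)]; by move/eqP; rewrite mulf_eq0 (negPf dn0) orbF => /eqP.
  by apply/matrixP => i j; rewrite z mxE.
case: (cV2_neq0 vn0) => h.
- exists (w 0 0 / v 0 0); apply: cV2P; rewrite !mxE; first by field.
  by apply: (mulfI h); move: d0; rewrite /d => /eqP; rewrite subr_eq0 => /eqP ->; field.
- exists (w 1 0 / v 1 0); apply: cV2P; rewrite !mxE; last by field.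
  by apply: (mulfI h); move: d0; rewrite /d => /eqP; rewrite subr_eq0 => /eqP <-; field.
Qed.

Lemma eq_by (x y e k : C) : e = 0 -> x - y = k * e -> x = y.
Proof. by move=> -> /eqP; rewrite mulr0 subr_eq0 => /eqP. Qed.

Definition cv2 (a b : C) : 'cV[C]_2 := \col_i (if i == 0 then a else b).
Lemma cv2E a b : (cv2 a b 0 0 = a) * (cv2 a b 1 0 = b).
Proof. by rewrite !mxE. Qed.

Lemma cv2_neq0 a b : (a != 0) || (b != 0) -> cv2 a b != 0.
Proof.
case/orP => h; apply: contraNneq h => e.
  by move: (congr1 (fun M : 'cV_2 => M 0 0) e); rewrite cv2E mxE => ->.
by move: (congr1 (fun M : 'cV_2 => M 1 0) e); rewrite cv2E mxE => ->.
Qed.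

Lemma eig_root A a : a ^+ 2 - tr2 A * a + dt2 A = 0 -> exists2 v : 'cV[C]_2, v != 0 & A *m v = a *: v.
Proof.
rewrite /tr2 /dt2 => hd.
have hd' : (A 0 0 - a) * (A 1 1 - a) - A 0 1 * A 1 0 = 0 by rewrite -hd; ring.
case: (eqVneq (A 0 1) 0) => h01; case: (eqVneq (A 0 0 - a) 0) => h00.
- case: (eqVneq (A 1 1 - a) 0) => h11; case: (eqVneq (A 1 0) 0) => h10.
  + exists (cv2 1 0); first by rewrite cv2_neq0 ?oner_eq0.
    apply: cV2P; rewrite !mulmx2E !mxE /=.
      by apply: (@eq_by _ _ _ 1 h00); ring.
    by rewrite h10; ring.
  + exists (cv2 (A 1 1 - a) (- A 1 0)); first by rewrite cv2_neq0 // oppr_eq0 h10 orbT.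
    apply: cV2P; rewrite !mulmx2E !mxE /=.
      by apply: (@eq_by _ _ _ 1 hd'); ring.
    by ring.
  + exists (cv2 (A 1 1 - a) (- A 1 0)); first by rewrite cv2_neq0 // h11.
    apply: cV2P; rewrite !mulmx2E !mxE /=.
      by apply: (@eq_by _ _ _ 1 hd'); ring.
    by ring.
  + exists (cv2 (A 1 1 - a) (- A 1 0)); first by rewrite cv2_neq0 // h11.
    apply: cV2P; rewrite !mulmx2E !mxE /=.
      by apply: (@eq_by _ _ _ 1 hd'); ring.
    by ring.
all: exists (cv2 (A 0 1) (- (A 0 0 - a))); first by rewrite cv2_neq0 // ?oppr_eq0 ?h00 ?h01 ?orbT.
all: apply: cV2P; rewrite !mulmx2E !mxE /=; [by ring | by apply: (@eq_by _ _ _ (-1) hd'); ring].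
Qed.

Lemma eig_exists A : exists a, exists2 v : 'cV[C]_2, v != 0 & A *m v = a *: v.
Proof.
set T := tr2 A; set D := dt2 A.
exists ((T + sqrtC (T ^+ 2 - 4%:R * D)) / 2%:R); apply: eig_root.
have s2 := sqrtCK (T ^+ 2 - 4%:R * D).
have n2 : (2%:R : C) != 0 by rewrite pnatr_eq0.
rewrite -/T -/D; set s := sqrtC _ in s2 *.
have e0 : s ^+ 2 - (T ^+ 2 - 4%:R * D) = 0 by rewrite s2 subrr.
apply: (@eq_by _ _ _ (1/4%:R) e0); field.
all: by rewrite ?pnatr_eq0.
Qed.

Lemma eq_by2 (x y e1 e2 k1 k2 : C) : e1 = 0 -> e2 = 0 -> x - y = k1 * e1 + k2 * e2 -> x = y.
Proof. by move=> -> -> /eqP; rewrite !mulr0 addr0 subr_eq0 => /eqP. Qed.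

Lemma eigval_root A v a : v != 0 -> A *m v = a *: v -> a ^+ 2 - tr2 A * a + dt2 A = 0.
Proof.
move=> vn0 e.
have e0 : A 0 0 * v 0 0 + A 0 1 * v 1 0 - a * v 0 0 = 0 by rewrite -mulmx2E e mxE subrr.
have e1 : A 1 0 * v 0 0 + A 1 1 * v 1 0 - a * v 1 0 = 0 by rewrite -mulmx2E e mxE subrr.
set d := a ^+ 2 - tr2 A * a + dt2 A.
have f0 : d * v 0 0 = 0.
  by apply: (@eq_by2 _ _ _ _ (A 1 1 - a) (- A 0 1) e0 e1); rewrite /d /tr2 /dt2; ring.
have f1 : d * v 1 0 = 0.
  by apply: (@eq_by2 _ _ _ _ (- A 1 0) (A 0 0 - a) e0 e1); rewrite /d /tr2 /dt2; ring.
case: (cV2_neq0 vn0) => h.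
  by move/eqP: f0; rewrite mulf_eq0 (negPf h) orbF => /eqP.
by move/eqP: f1; rewrite mulf_eq0 (negPf h) orbF => /eqP.
Qed.

Lemma dt_inj N v : dt2 N != 0 -> N *m v = 0 -> v = 0.
Proof.
move=> dn0 e.
have e0 : N 0 0 * v 0 0 + N 0 1 * v 1 0 = 0 by rewrite -mulmx2E e mxE.
have e1 : N 1 0 * v 0 0 + N 1 1 * v 1 0 = 0 by rewrite -mulmx2E e mxE.
have f0 : dt2 N * v 0 0 = 0.
  by apply: (@eq_by2 _ _ _ _ (N 1 1) (- N 0 1) e0 e1); rewrite /dt2; ring.
have f1 : dt2 N * v 1 0 = 0.
  by apply: (@eq_by2 _ _ _ _ (- N 1 0) (N 0 0) e0 e1); rewrite /dt2; ring.
apply: cV2P; rewrite mxE.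
  by move/eqP: f0; rewrite mulf_eq0 (negPf dn0) => /eqP.
by move/eqP: f1; rewrite mulf_eq0 (negPf dn0) => /eqP.
Qed.


Lemma scal0 : (0 : C)%:M = 0 :> 'M[C]_2.
Proof. by apply/matrixP => i j; rewrite !mxE mul0rn. Qed.

Lemma exists_col N : N != 0 -> exists w : 'cV[C]_2, N *m w != 0.
Proof.
move=> Nn0; case: (eqVneq (N *m cv2 1 0) 0) => h1; last by exists (cv2 1 0).
case: (eqVneq (N *m cv2 0 1) 0) => h2; last by exists (cv2 0 1).
case/eqP: Nn0; apply: M2P.
- by move: (congr1 (fun M : 'cV_2 => M 0 0) h1); rewrite mulmx2E !mxE /= => <-; ring.
- by move: (congr1 (fun M : 'cV_2 => M 0 0) h2); rewrite mulmx2E !mxE /= => <-; ring.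
- by move: (congr1 (fun M : 'cV_2 => M 1 0) h1); rewrite mulmx2E !mxE /= => <-; ring.
- by move: (congr1 (fun M : 'cV_2 => M 1 0) h2); rewrite mulmx2E !mxE /= => <-; ring.
Qed.

Lemma comm_eig A B v a : A * B = B * A -> A *m v = a *: v -> A != a%:M -> v != 0 ->
  exists k, B *m v = k *: v.
Proof.
move=> AB Av Aa vn0.
apply: (@K2 (A - a%:M) v (B *m v)); rewrite ?subr_eq0 //.
  by rewrite mulmxBl Av mul_scalar_mx subrr.
rewrite mulmxBl mulmxA.
have -> : A *m B = A * B by [].
by rewrite AB -mulmxA Av -scalemxAr mul_scalar_mx subrr.
Qed.

Definition ceig (X Y H : 'M[C]_2) :=
  exists2 v : 'cV[C]_2, v != 0 &
   [/\ exists a, X *m v = a *: v, exists b, Y *m v = b *: v & exists c, H *m v = c *: v].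

Lemma comm3 X Y H : H * X = X * H -> Y * H = H * Y -> Y * X = X * Y -> ceig X Y H.
Proof.
move=> HX YH YX.
have [l [u un0 Hu]] := eig_exists H.
case: (eqVneq H l%:M) => Hl; last first.
  have [k1 e1] := comm_eig HX Hu Hl un0.
  have [k2 e2] := comm_eig (esym YH) Hu Hl un0.
  by exists u => //; split; [exists k1 | exists k2 | exists l].
have [m [u2 un2 Xu]] := eig_exists X.
have Hu2 : H *m u2 = l *: u2 by rewrite Hl mul_scalar_mx.
case: (eqVneq X m%:M) => Xm; last first.
  have [k2 e2] := comm_eig (esym YX) Xu Xm un2.
  by exists u2 => //; split; [exists m | exists k2 | exists l].
have [p [u3 un3 Yu]] := eig_exists Y.
exists u3 => //; split; [exists m | exists p | exists l].
- by rewrite Xm mul_scalar_mx.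
- exact: Yu.
- by rewrite Hl mul_scalar_mx.
Qed.

Definition q34 : C := 3%:R / 4%:R.
Definition gg (t : C) := t * t + t - q34.
Definition ff (t : C) := t * t + t + t - q34.

Lemma HHvec (H : 'M[C]_2) (z : 'cV[C]_2) (m : C) : H *m z = m *: z -> (H * H) *m z = (m * m) *: z.
Proof.
move=> Hz; have -> : (H * H) *m z = H *m (H *m z) by rewrite mulmxA.
by rewrite Hz -scalemxAr Hz scalerA.
Qed.

Lemma Fvec (H : 'M[C]_2) (z : 'cV[C]_2) (m : C) : H *m z = m *: z ->
  (H * H + H + H - q34%:M) *m z = ff m *: z.
Proof.
move=> Hz; rewrite !mulmxBl !mulmxDl (HHvec Hz) Hz mul_scalar_mx.
by rewrite /ff !scalerBl !scalerDl.
Qed.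

Lemma Mvec (H : 'M[C]_2) (z : 'cV[C]_2) (m : C) : H *m z = m *: z ->
  (H * H + H + H - q34%:M - H) *m z = gg m *: z.
Proof.
move=> Hz; rewrite mulmxBl (Fvec Hz) Hz -scalerBl /ff /gg.
by congr (_ *: _); ring.
Qed.

Lemma n2 : (2%:R : C) != 0. Proof. by rewrite pnatr_eq0. Qed.
Lemma n4 : (4%:R : C) != 0. Proof. by rewrite pnatr_eq0. Qed.

Lemma poly_contra a b : gg a != 0 -> gg a + gg b = 0 -> b = ff a -> False.
Proof.
move=> ga s hb; subst b.
have e : gg a * ((a + 3%:R/2%:R) ^+ 2) = 0.
  by apply: (@eq_by _ _ _ 1 s); rewrite /gg /ff /q34; field; rewrite ?n4 ?n2.
move/eqP: e; rewrite mulf_eq0 (negPf ga) /= expf_eq0 /= => /eqP e.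
have : gg a = (a + 3%:R/2%:R) * (a - 1/2%:R).
  by rewrite /gg /q34; field; rewrite ?n4 ?n2.
by rewrite e mul0r; apply/eqP.
Qed.

Lemma Xu_zero (H X : 'M[C]_2) (u : 'cV[C]_2) (a b : C) :
  H * X = X * (H * H + H + H - q34%:M) -> H *m u = a *: u -> u != 0 ->
  tr2 H = a + b -> dt2 H = a * b -> gg a != 0 -> gg a + gg b = 0 -> X *m u = 0.
Proof.
move=> HX Hu un0 tr dt ga s.
apply/eqP; apply: contraT => Xn0.
have e : H *m (X *m u) = ff a *: (X *m u).
  by rewrite mulmxA; have -> : H *m X = H * X by []; rewrite HX -mulmxA (Fvec Hu) -scalemxAr.
have := eigval_root Xn0 e; rewrite tr dt => r.
have : (ff a - a) * (ff a - b) = 0 by rewrite -r; ring.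
move/eqP; rewrite mulf_eq0 => /orP [] /eqP h.
  have gE : gg a = ff a - a by rewrite /gg /ff; ring.
  by move: ga; rewrite gE h eqxx.
exfalso; apply: (poly_contra ga s); apply/eqP; by rewrite eq_sym -subr_eq0 h.
Qed.

Lemma main2 X Y H : H * X = X * (H*H + H + H - q34%:M) ->
  Y * H = (H*H + H + H - q34%:M) * Y ->
  Y * X - X * Y = (H*H + H + H - q34%:M) - H -> ceig X Y H.
Proof.
set F := H*H + H + H - q34%:M.
set M := F - H.
move=> HX HY HC.
have cC : forall z : 'M[C]_2, q34%:M * z = z * q34%:M.
  by move=> z; rewrite -!mulmxE scalar_mxC.
have FE0 : F = H*H + H + H - q34%:M by [].
have ME0 : M = F - H by [].
have trM : tr2 M = 0 by rewrite -HC tr2B tr2_comm subrr.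
case: (eqVneq M 0) => M0.
  have FH : F = H by rewrite (FE ME0) M0 addr0.
  apply: comm3.
  - by rewrite HX FH.
  - by rewrite HY FH.
  - by apply/eqP; rewrite -subr_eq0 HC -/M M0.
case: (eqVneq (dt2 M) 0) => dM.
  have MM : M * M = 0 by rewrite CH2 trM dM scale0r scal0 subr0.
  have [w Mw] := exists_col M0.
  set v := M *m w in Mw *.
  have Mv : M *m v = 0.
    by rewrite /v mulmxA; have -> : M *m M = M * M by []; rewrite MM mul0mx.
  exists v => //; split.
  - apply: (K2 M0 Mw Mv); rewrite /v !mulmxA.
    have -> : M *m X *m M = M * X * M by [].
    by rewrite (MXM cC FE0 ME0 HX) // mul0mx.
  - apply: (K2 M0 Mw Mv); rewrite /v !mulmxA.
    have -> : M *m Y *m M = M * Y * M by [].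
    by rewrite (MYM cC FE0 ME0 HY) // mul0mx.
  - apply: (K2 M0 Mw Mv); rewrite /v !mulmxA.
    have -> : M *m H *m M = M * H * M by [].
    by rewrite (Mh cC FE0 ME0) -mulrA MM mulr0 mul0mx.
exfalso.
set T := tr2 H; set D := dt2 H.
have [a [u un0 Hu]] := eig_exists H.
set b := T - a.
have ra := eigval_root un0 Hu; rewrite -/T -/D in ra.
have rb : b ^+ 2 - T * b + D = 0 by rewrite -ra /b; ring.
have [w wn0 Hw] := eig_root rb.
have trab : tr2 H = a + b by rewrite /b -/T; ring.
have dtab : dt2 H = a * b by rewrite -/D; apply: (@eq_by _ _ _ 1 ra); rewrite /b; ring.
have gz (z : 'cV[C]_2) m : z != 0 -> H *m z = m *: z -> gg m != 0.
  move=> zn0 Hz; apply/eqP => g0; move: zn0.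
  by rewrite (dt_inj dM (_ : M *m z = 0)) ?eqxx // /M /F (Mvec Hz) g0 scale0r.
have ga := gz _ _ un0 Hu; have gb := gz _ _ wn0 Hw.
have s : gg a + gg b = 0.
  rewrite -trM /M /F !tr2B !tr2D trHH tr2c trab dtab /gg; ring.
have Xu := Xu_zero HX Hu un0 trab dtab ga s.
have Xw : X *m w = 0.
  apply: (Xu_zero HX Hw wn0 _ _ gb); first by rewrite trab addrC.
    by rewrite dtab mulrC.
  by rewrite addrC.
have X0 : X = 0.
  apply/eqP; apply: contraT => Xn0.
  have [k wk] := K2 Xn0 un0 Xu Xw.
  have ab : (a - b) *: w = 0.
    have Hw' : H *m w = a *: w by rewrite wk -scalemxAr Hu scalerA mulrC -scalerA.
    by rewrite scalerBl -Hw -Hw' subrr.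
  move/eqP: ab; rewrite scaler_eq0 (negPf wn0) orbF subr_eq0 => /eqP ab.
  move: s; rewrite ab => /eqP; rewrite -mulr2n -mulr_natr mulf_eq0 (negPf gb) /=.
  by rewrite pnatr_eq0.
by move: M0; rewrite -HC X0 mulr0 mul0r subrr eqxx.
Qed.
Lemma part2 : ~ (exists X Y H : 'M[C]_2,
       Hf_rel ('X ^+ 2 + 2%:R *: 'X - (3%:R / 4%:R)%:P) X Y H /\
       simple_mod2 X Y H).
Proof.
case=> X [Y [H [[HX HY HC] Hs]]].
have Fe : horner_mx H ('X ^+ 2 + 2%:R *: 'X - (3%:R / 4%:R)%:P) = H*H + H + H - q34%:M.
  rewrite rmorphB rmorphD /= rmorphXn /= linearZ /= horner_mx_X horner_mx_C expr2.
  by rewrite scaler_nat mulr2n addrA.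
rewrite Fe in HX HY HC.
have [v vn0 [[a Xv] [b Yv] [c Hv]]] := main2 HX HY HC.
pose U : 'M[C]_2 := \matrix_(i, j) (if i == 0 then v j 0 else 0).
have inv (A : 'M[C]_2) k : A *m v = k *: v -> (U *m A^T <= U)%MS.
  move=> Av; have -> : U *m A^T = k *: U.
    have -> : U *m A^T = U * A^T by [].
    apply/matrixP => i j; rewrite mulmx22E !mxE.
    case: (I2 i) => -> /=; last by ring.
    have ej := congr1 (fun M : 'cV_2 => M j 0) Av; rewrite /= mulmx2E mxE in ej.
    by rewrite -ej; ring.
  by apply: scalemx_sub; exact: submx_refl.
case: (Hs U (inv _ _ Xv) (inv _ _ Yv) (inv _ _ Hv)) => [U0|].
  case/eqP: vn0; apply: cV2P.
    by move: (congr1 (fun M : 'M_2 => M 0 0) U0); rewrite !mxE.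
  by move: (congr1 (fun M : 'M_2 => M 0 1) U0); rewrite !mxE.
case/row_fullP => B hB.
have e i j : (B *m U) i j = B i 0 * v j 0.
  have -> : B *m U = B * U by [].
  by rewrite mulmx22E !mxE /=; ring.
have e00 := e 0 0; have e11 := e 1 1; have e01 := e 0 1; have e10 := e 1 0.
rewrite hB !mxE /= in e00 e11 e01 e10.
have : (B 0 0 * v 0 0) * (B 1 0 * v 1 0) - (B 0 0 * v 1 0) * (B 1 0 * v 0 0) = 0 by ring.
rewrite -e00 -e11 -e01 -e10 mul1r mul0r subr0 => /eqP.
by rewrite oner_eq0.
Qed.
End Two.

Section Reach.
Variables (C : comNzRingType) (k : nat) (Xa Ya Ha : 'M[C]_k.+1).
Definition reach A := exists t : ncterm C, nceval Xa Ya Ha t = A.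

Lemma rC a : reach a%:M. Proof. by exists (NCconst a). Qed.
Lemma rX : reach Xa. Proof. by exists (NCx C). Qed.
Lemma rY : reach Ya. Proof. by exists (NCy C). Qed.
Lemma rH : reach Ha. Proof. by exists (NCh C). Qed.
Lemma rD A B : reach A -> reach B -> reach (A + B).
Proof. by move=> [t1 <-] [t2 <-]; exists (NCadd t1 t2). Qed.
Lemma rM A B : reach A -> reach B -> reach (A * B).
Proof. by move=> [t1 <-] [t2 <-]; exists (NCmul t1 t2). Qed.
Lemma rZ a A : reach A -> reach (a *: A).
Proof. by move=> hA; rewrite -mul_scalar_mx; apply: rM (rC a) hA. Qed.
Lemma r0 : reach 0.
Proof. by rewrite -(scale0r 1%:M); apply: rZ (rC 1). Qed.
Lemma rsum (I : finType) (F : I -> 'M[C]_k.+1) : (forall i, reach (F i)) -> reach (\sum_i F i).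
Proof. by move=> hF; apply: (big_ind reach r0 rD) => i _; apply: hF. Qed.
Lemma rpowX e : reach (Xa ^+ e).
Proof. elim: e => [|e IH]; first exact: rC. by rewrite exprS; apply: rM rX IH. Qed.
Lemma rpoly p : reach (horner_mx Ha p).
Proof.
elim/poly_ind: p => [|p c IH]; first by rewrite rmorph0; exact: r0.
by rewrite rmorphD rmorphM /= horner_mx_X horner_mx_C; apply: rD (rC c); apply: rM IH rH.
Qed.
End Reach.

Section One.
Variable C : numClosedFieldType.

Lemma prim_root_ex (K : nat) : (K > 0)%N -> exists z : C, K.-primitive_root z.
Proof.
pose p : {poly C} := 'X^K - 1; have [r Dp] := closed_field_poly_normal p.
move=> K_gt0; rewrite (monicP _) ?monicXnsubC // scale1r in Dp.
have rn1: all K.-unity_root r by apply/allP=> z; rewrite -root_prod_XsubC -Dp.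
have sz_r: (K < (size r).+1)%N.
  by rewrite -(size_prod_XsubC r id) -Dp size_XnsubC.
have [|z] := hasP (has_prim_root K_gt0 rn1 _ sz_r); last by exists z.
by rewrite -separable_prod_XsubC -Dp separable_Xn_sub_1 // pnatr_eq0 -lt0n.
Qed.


Variables (m n : nat) (m2 : (2 <= m)%N) (z : C) (zp : ((m ^ n.+1).-1).-primitive_root z).

Definition lam (i : 'I_n.+1) : C := z ^+ (m ^ (n - i)).
Definition sh : 'S_n.+1 := perm (@ordS_inj n.+1).
Definition Xm : 'M[C]_n.+1 := perm_mx sh.
Definition Hd : 'M[C]_n.+1 := diag_mx (\row_i lam i).
Definition Hm : 'M[C]_n.+1 := diag_mx (\row_i (lam i ^+ m)).
Definition Dt (t : C) : 'M[C]_n.+1 := diag_mx (\row_i (lam i ^+ m + t)).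
Definition Ym (t : C) : 'M[C]_n.+1 := Dt t *m Xm^T.

Lemma shE i : val (sh i) = (i.+1 %% n.+1)%N.
Proof. by rewrite permE. Qed.

Lemma zN : z ^+ (m ^ n.+1) = z.
Proof.
have hp : (0 < m ^ n.+1)%N by rewrite expn_gt0; apply/orP; left; lia.
by rewrite -(prednK hp) exprS prim_expr_order // mulr1.
Qed.

Lemma lamS i : lam i = lam (sh i) ^+ m.
Proof.
rewrite /lam -exprM -expnSr shE.
have [lt|ge] := ltnP i n.
  by rewrite modn_small ?ltnS // subnSK.
have -> : (i : nat) = n by apply/eqP; rewrite eqn_leq ge -ltnS ltn_ord.
by rewrite modnn subn0 subnn expn0 expr1 zN.
Qed.

Lemma lamI : injective lam.
Proof.
move=> i j; rewrite /lam => /eqP; rewrite (eq_prim_root_expr zp).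
case: n i j zp => [|n'] i j zp'.
  by move=> _; rewrite (ord1 i) (ord1 j).
have mP : (1 < m)%N by [].
have bnd k : (k <= n'.+1)%N -> (m ^ k < (m ^ n'.+2).-1)%N.
  move=> kl; have h1 : (m ^ k <= m ^ n'.+1)%N by rewrite leq_pexp2l // ltnW.
  have h2 : (2 <= m ^ n'.+1)%N.
    by apply: leq_trans (leq_pexp2l (ltnW mP) (ltn0Sn n')); rewrite expn1.
  rewrite expnS; have : (2 * m ^ n'.+1 <= m * m ^ n'.+1)%N by rewrite leq_mul2r m2 orbT.
  by lia.
rewrite !modn_small ?bnd ?leq_subr // => /eqP /(expnI mP) e.
apply: val_inj => /=; have := ltn_ord i; have := ltn_ord j; lia.
Qed.

Lemma XE i j : Xm i j = (sh i == j)%:R.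
Proof. by rewrite /Xm /perm_mx !mxE. Qed.

Lemma sum_sel (a : 'I_n.+1) (F : 'I_n.+1 -> C) :
  \sum_k ((a == k)%:R * F k) = F a.
Proof.
rewrite (bigD1 a) //= eqxx mul1r big1 ?addr0 // => k kn.
by rewrite eq_sym (negPf kn) mul0r.
Qed.

Lemma R1 : Hd *m Xm = Xm *m Hm.
Proof.
apply/matrixP => i j; rewrite mul_diag_mx mul_mx_diag !mxE.
case: (eqVneq (sh i) j) => [<-|] /=; last by rewrite !mulr0n mulr0 mul0r.
by rewrite !mulr1n mulr1 mul1r -lamS.
Qed.

Lemma R2 t : Ym t *m Hd = Hm *m Ym t.
Proof.
rewrite /Ym -mulmxA mul_mx_diag !mul_diag_mx.
apply/matrixP => i j; rewrite !mxE.
case: (eqVneq (sh j) i) => [<-|] /=; last by rewrite !mulr0n !mul0r !mulr0.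
by rewrite !mulr1n -lamS; ring.
Qed.

Lemma XtX : Xm^T *m Xm = 1%:M.
Proof. by rewrite /Xm tr_perm_mx -perm_mxM mulVg perm_mx1. Qed.

Lemma R3 t : Ym t *m Xm - Xm *m Ym t = Hm - Hd.
Proof.
rewrite /Ym -mulmxA XtX mulmx1 mulmxA mul_mx_diag.
apply/matrixP => i j; rewrite !mxE.
rewrite (eq_bigr (fun k => (sh i == k)%:R * ((lam k ^+ m + t) * (sh j == k)%:R))); last first.
  by move=> k _; rewrite !mxE mulrA.
rewrite sum_sel (inj_eq perm_inj) [j == i]eq_sym.
case: (eqVneq i j) => [_|ij] /=.
  by rewrite !mulr1n mulr1 -lamS; ring.
by rewrite !mulr0n mulr0 subrr.
Qed.

Lemma Xpow e : Xm ^+ e = perm_mx (sh ^+ e)%g.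
Proof.
elim: e => [|e IH]; first by rewrite expr0 expg0 perm_mx1.
by rewrite exprS IH expgS perm_mxM.
Qed.

Lemma shX (r : 'I_n.+1) e : val ((sh ^+ e)%g r) = ((r + e) %% n.+1)%N.
Proof.
rewrite permX; elim: e => [|e IH] /=; first by rewrite addn0 modn_small.
by rewrite shE IH -addn1 modnDml addn1 addnS.
Qed.

Lemma delta_gen (r j : 'I_n.+1) : exists e, delta_mx r j = Xm ^+ e *m delta_mx j j.
Proof.
exists (j + (n.+1 - r))%N.
have e : (sh ^+ (j + (n.+1 - r)))%g r = j.
  apply: val_inj; rewrite shX addnA addnC addnA subnK; last exact: ltnW.
  by rewrite addnC modnDr modn_small.
rewrite Xpow -row_permE; apply/matrixP => i i'; rewrite !mxE.
set sg := (sh ^+ _)%g in e *.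
by rewrite -[X in sg i == X]e (inj_eq perm_inj).
Qed.

Lemma diag_delta t (j : 'I_n.+1) : reach Xm (Ym t) Hd (delta_mx j j).
Proof.
set c := \prod_(k | k != j) (lam j - lam k).
have cn0 : c != 0.
  apply/prodf_neq0 => k kj; rewrite subr_eq0; apply/eqP => e.
  by move/eqP: kj; apply; apply: lamI.
have -> : delta_mx j j = c^-1 *: horner_mx Hd (\prod_(k | k != j) ('X - (lam k)%:P)).
  rewrite /Hd horner_mx_diag; apply/matrixP => i i'; rewrite !mxE horner_prod.
  under eq_bigr do rewrite hornerXsubC.
  case: (eqVneq i j) => [->|ij] /=.
    by rewrite -/c mulrnAr mulVf // eq_sym.
  by rewrite (bigD1 i ij) /= subrr mul0r mul0rn mulr0.
exact/rZ/rpoly.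
Qed.

Lemma onto t : Hf_rep_onto Xm (Ym t) Hd.
Proof.
move=> A; rewrite (matrix_sum_delta A).
apply: rsum => i; apply: rsum => j; apply: rZ.
have [e ->] := delta_gen i j.
exact: rM (rpowX _ _ _ _) (diag_delta t j).
Qed.

Lemma HmE : horner_mx Hd ('X ^+ m) = Hm.
Proof.
rewrite /Hd horner_mx_diag; apply/matrixP => i j; rewrite !mxE.
by rewrite hornerXn.
Qed.

Fixpoint hpow e : ncterm C := match e with 0%N => NCconst 1 | e'.+1 => NCmul (NCh C) (hpow e') end.

Lemma hpowE (X Y H : 'M[C]_n.+1) e : nceval X Y H (hpow e) = H ^+ e.
Proof. by elim: e => [|e IH] //=; rewrite IH exprS. Qed.

Definition tk (s : C) : ncterm C :=
  NCadd (NCmul (NCy C) (NCx C)) (NCadd (NCmul (NCconst (-1)) (hpow m)) (NCconst (- s))).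

Lemma tkE t s : nceval Xm (Ym t) Hd (tk s) = (t - s)%:M.
Proof.
have HdX : Hd ^+ m = horner_mx Hd ('X ^+ m) by rewrite rmorphXn /= horner_mx_X.
rewrite /= hpowE HdX.
have -> : Ym t * Xm = Dt t by rewrite /Ym -mulmxE -mulmxA XtX mulmx1.
rewrite HmE -mulmxE mul_scalar_mx scaleN1r.
apply/matrixP => i j; rewrite !mxE.
case: (i == j) => /=; [rewrite !mulr1n | rewrite !mulr0n]; ring.
Qed.

Lemma scal_eq0 (a : C) : ((a%:M : 'M[C]_n.+1) == 0) = (a == 0).
Proof.
apply/eqP/eqP => [e|->]; last by apply/matrixP => i j; rewrite !mxE mul0rn.
by move: (congr1 (fun M : 'M[C]_n.+1 => M 0 0) e); rewrite !mxE eqxx mulr1n.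
Qed.

End One.

Lemma part1 (C : numClosedFieldType) : forall (m : nat), (2 <= m)%N ->
   forall (n : nat),
   exists T : nat -> 'M[C]_n.+1 * 'M[C]_n.+1 * 'M[C]_n.+1,
     (forall k, let: (X, Y, H) := T k in
        Hf_rel ('X ^+ m) X Y H /\ Hf_rep_onto X Y H) /\
     (forall k l, k <> l ->
        let: (X, Y, H) := T k in let: (X', Y', H') := T l in
        Hf_ker_differ X Y H X' Y' H').
Proof.
move=> m m2 n.
have Kp : (0 < (m ^ n.+1).-1)%N.
  have h : (0 < m ^ n)%N by rewrite expn_gt0; apply/orP; left; lia.
  rewrite expnS; nia.
have [z zp] := prim_root_ex C Kp.
exists (fun k => (Xm C n, Ym m n z k%:R, Hd m n z)); split.
  move=> k; split; last exact: (onto m2 zp).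
  rewrite /Hf_rel HmE; split.
  - exact: (R1 m2 zp).
  - exact: (R2 m2 zp).
  - exact: (R3 m2 zp).
move=> k l kl; exists (tk m k%:R); rewrite !tkE !scal_eq0 subrr eqxx.
rewrite subr_eq0 eqr_nat. case: (eqVneq l k) => [e|//]. by case: kl.
Qed.

Theorem mainTheorem15 (C : numClosedFieldType) :
  (forall (m : nat), (2 <= m)%N ->
   forall (n : nat),
   exists T : nat -> 'M[C]_n.+1 * 'M[C]_n.+1 * 'M[C]_n.+1,
     (forall k, let: (X, Y, H) := T k in
        Hf_rel ('X ^+ m) X Y H /\ Hf_rep_onto X Y H) /\
     (forall k l, k <> l ->
        let: (X, Y, H) := T k in let: (X', Y', H') := T l in
        Hf_ker_differ X Y H X' Y' H'))
  /\
  ~ (exists X Y H : 'M[C]_2,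
       Hf_rel ('X ^+ 2 + 2%:R *: 'X - (3%:R / 4%:R)%:P) X Y H /\
       simple_mod2 X Y H).
Proof.
split; [exact: part1 | exact: part2].
Qed.
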